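(* Let $T\in\mathcal{BC}(X)$ and $s\in\mathbb H$ with $\|T\|<|s|$. Then the series $\sum_{m=1}^\infty\sum_{k=1}^mT^{m-k}\bar T^{k-1}s^{-1-m}$ and $\sum_{m=1}^\infty\sum_{k=1}^ms^{-1-m}T^{m-k}\bar T^{k-1}$ converge in operator norm, and $$\sum_{m=1}^\infty\sum_{k=1}^mT^{m-k}\bar T^{k-1}s^{-1-m}=\sum_{m=1}^\infty\sum_{k=1}^ms^{-1-m}T^{m-k}\bar T^{k-1}=\mathcal Q_{c,s}(T)^{-1}.$$
   Context: $\mathbb H$ denotes the quaternions with units $e_1,e_2,e_3$. $X=X_{\mathbb R}\otimes\mathbb H$ is a two-sided quaternionic Banach module over a real Banach space $X_{\mathbb R}$; $\mathcal{BC}(X)$ is the set of $T=T_0+\sum_{i=1}^3T_ie_i$ with pairwise commuting $T_i\in\mathcal B(X_{\mathbb R})$; $\bar T=T_0-\sum T_ie_i$; $\mathcal Q_{c,s}(T)=s^2\mathcal I-s(T+\bar T)+T\bar T$. *)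

(* Defs.v *)
From HB Require Import structures.
From mathcomp Require Import all_boot all_order all_algebra.
From mathcomp Require Import all_classical all_reals all_analysis.
Set Implicit Arguments. Unset Strict Implicit. Unset Printing Implicit Defensive.
Import Order.TTheory GRing.Theory Num.Theory.
Import numFieldNormedType.Exports.
Local Open Scope ring_scope.
Local Open Scope classical_set_scope.

(* Quaternions with coefficients in A : x = q0 + q1 e1 + q2 e2 + q3 e3. *)
Record quat (A : Type) := Quat { q0 : A; q1 : A; q2 : A; q3 : A }.

Section QuatGen.
Variables (A B C : Type) (Cz : zmodType).

(* Hamilton product with a coefficient multiplication "mul"; the order of the
   units e_i e_j is that of the arguments (e1 e2 = e3, e2 e3 = e1, e3 e1 = e2). *)
Definition qmulG (mul : A -> B -> Cz) (p : quat A) (q : quat B) : quat Cz :=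
  Quat
    (mul (q0 p) (q0 q) - mul (q1 p) (q1 q) - mul (q2 p) (q2 q) - mul (q3 p) (q3 q))
    (mul (q0 p) (q1 q) + mul (q1 p) (q0 q) + mul (q2 p) (q3 q) - mul (q3 p) (q2 q))
    (mul (q0 p) (q2 q) - mul (q1 p) (q3 q) + mul (q2 p) (q0 q) + mul (q3 p) (q1 q))
    (mul (q0 p) (q3 q) + mul (q1 p) (q2 q) - mul (q2 p) (q1 q) + mul (q3 p) (q0 q)).

Definition qadd (p q : quat Cz) : quat Cz :=
  Quat (q0 p + q0 q) (q1 p + q1 q) (q2 p + q2 q) (q3 p + q3 q).
Definition qopp (p : quat Cz) : quat Cz :=
  Quat (- q0 p) (- q1 p) (- q2 p) (- q3 p).
Definition qsub (p q : quat Cz) : quat Cz := qadd p (qopp q).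
Definition qconj (p : quat Cz) : quat Cz :=
  Quat (q0 p) (- q1 p) (- q2 p) (- q3 p).
Definition qsum (m n : nat) (F : nat -> quat Cz) : quat Cz :=
  Quat (\sum_(m <= i < n) q0 (F i)) (\sum_(m <= i < n) q1 (F i))
       (\sum_(m <= i < n) q2 (F i)) (\sum_(m <= i < n) q3 (F i)).
End QuatGen.

Section Quaternions.
Variable R : realType.

Definition H := quat R.
Definition hmul (p q : H) : H := qmulG (fun a b : R => a * b) p q.
Definition hone : H := Quat 1 0 0 0.
Definition habs (p : H) : R :=
  Num.sqrt (q0 p ^+ 2 + q1 p ^+ 2 + q2 p ^+ 2 + q3 p ^+ 2).
Definition hinv (p : H) : H :=
  let n := habs p ^+ 2 in
  Quat (q0 p / n) (- q1 p / n) (- q2 p / n) (- q3 p / n).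
Definition hpow (p : H) (n : nat) : H := iter n (hmul p) hone.

Variable V : normedModType R.

Definition op := V -> V.
Definition bounded_op (f : op) : Prop :=
  (forall (a : R) (u v : V), f (a *: u + v) = a *: f u + f v) /\ continuous f.
Definition opnorm (f : op) : R := sup [set `|f x| | x in [set x : V | `|x| <= 1]].

Definition qop := quat op.
Definition in_BC (T : qop) : Prop :=
  [/\ bounded_op (q0 T), bounded_op (q1 T), bounded_op (q2 T), bounded_op (q3 T)
    & forall f g, f \in [:: q0 T; q1 T; q2 T; q3 T] ->
        g \in [:: q0 T; q1 T; q2 T; q3 T] -> f \o g = g \o f].

Definition bounded_qop (T : qop) : Prop :=
  [/\ bounded_op (q0 T), bounded_op (q1 T), bounded_op (q2 T) & bounded_op (q3 T)].

Definition qop_mul (S T : qop) : qop := qmulG (fun f g : op => f \o g) S T.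
Definition qop_id : qop := Quat (@id V) 0 0 0.
Definition qop_pow (T : qop) (n : nat) : qop := iter n (qop_mul T) qop_id.
Definition hqop_mul (s : H) (T : qop) : qop := qmulG (fun (a : R) (f : op) => a *: f) s T.
Definition qoph_mul (T : qop) (s : H) : qop := qmulG (fun (f : op) (a : R) => a *: f) T s.
Definition qopnorm (T : qop) : R :=
  opnorm (q0 T) + opnorm (q1 T) + opnorm (q2 T) + opnorm (q3 T).

(* X = X_R (x) H, x = x0 + x1 e1 + x2 e2 + x3 e3, and the action of T on X *)
Definition X := quat V.
Definition qop_apply (T : qop) (x : X) : X := qmulG (fun (f : op) (v : V) => f v) T x.

Definition Qcs (T : qop) (s : H) : qop :=
  qadd (qsub (hqop_mul (hmul s s) qop_id) (hqop_mul s (qadd T (qconj T))))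
       (qop_mul T (qconj T)).

Definition series_right (T : qop) (s : H) (N : nat) : qop :=
  qsum 1 N.+1 (fun m => qsum 1 m.+1 (fun k =>
    qoph_mul (qop_mul (qop_pow T (m - k)) (qop_pow (qconj T) (k - 1)))
             (hpow (hinv s) (m.+1)))).
Definition series_left (T : qop) (s : H) (N : nat) : qop :=
  qsum 1 N.+1 (fun m => qsum 1 m.+1 (fun k =>
    hqop_mul (hpow (hinv s) (m.+1))
             (qop_mul (qop_pow T (m - k)) (qop_pow (qconj T) (k - 1))))).
End Quaternions.

(* Main.v *)
Require Import Defs.
From HB Require Import structures.
From mathcomp Require Import all_boot all_order all_algebra.
From mathcomp Require Import all_classical all_reals all_analysis.
From mathcomp Require Import ring lra zify.
Set Implicit Arguments. Unset Strict Implicit. Unset Printing Implicit Defensive.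
Import Order.TTheory GRing.Theory Num.Theory.
Import numFieldNormedType.Exports.
Local Open Scope ring_scope.
Local Open Scope classical_set_scope.

Section Blin.
Variables (R : realType) (V : normedModType R).
Definition islin (f : V -> V) := forall (a : R) (u v : V), f (a *: u + v) = a *: f u + f v.
Definition blin (f : V -> V) := islin f /\ exists M : R, 0 <= M /\ forall x, `|f x| <= M * `|x|.

Lemma lin0 f : islin f -> f 0 = 0.
Proof. move=> H; have := H 1 0 0; rewrite !scale1r addr0 => h.
apply: (addrI (f 0)); by rewrite addr0 -h. Qed.
Lemma linD f : islin f -> forall u v, f (u + v) = f u + f v.
Proof. by move=> H u v; have := H 1 u v; rewrite !scale1r. Qed.
Lemma linZ f : islin f -> forall a u, f (a *: u) = a *: f u.
Proof. by move=> H a u; have := H a u 0; rewrite !addr0 (lin0 H) addr0. Qed.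
Lemma linN f : islin f -> forall u, f (- u) = - f u.
Proof. by move=> H u; rewrite -scaleN1r linZ // scaleN1r. Qed.
Lemma linB f : islin f -> forall u v, f (u - v) = f u - f v.
Proof. by move=> H u v; rewrite linD // linN. Qed.

End Blin.

Section Bop.
Variables (R : realType) (V : normedModType R).
Implicit Types f g : V -> V.

Lemma bounded_op_blin f : bounded_op f -> blin f.
Proof.
move=> [H C]; split => //.
pose lf : {linear V -> V} := HB.pack f (GRing.isLinear.Build R V V *:%R f H).
have : continuous lf by [].
move=> /linear_bounded_continuous/linear_boundedP/pinfty_ex_gt0 [M M0 HM].
by exists M; split => //; apply: ltW.
Qed.

Lemma blin_bounded_op f : blin f -> bounded_op f.
Proof.
move=> [H [M [M0 HM]]]; split => //.
pose lf : {linear V -> V} := HB.pack f (GRing.isLinear.Build R V V *:%R f H).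
suff : continuous lf by [].
apply/linear_bounded_continuous/linear_boundedP.
near=> r => x; apply: (le_trans (HM x)); apply: ler_wpM2r => //.
Unshelve. all: by end_near.
Qed.

Lemma opnorm_le f c : (forall x, `|x| <= 1 -> `|f x| <= c) -> opnorm f <= c.
Proof.
move=> H; apply: ge_sup.
  by exists `|f 0|, 0 => //=; rewrite normr0.
by move=> _ [x /= x1 <-]; apply: H.
Qed.

Lemma opnorm_ub f : blin f -> forall x, `|x| <= 1 -> `|f x| <= opnorm f.
Proof.
move=> [H [M [M0 HM]]] x x1; apply: sup_upper_bound; last by exists x.
split; first by exists `|f 0|, 0 => //=; rewrite normr0.
exists M => _ [y /= y1 <-]; apply: (le_trans (HM y)).
by rewrite -[leRHS]mulr1 ler_wpM2l.
Qed.

Lemma opnorm_ge0 f : blin f -> 0 <= opnorm f.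
Proof.
move=> hf; have := opnorm_ub hf (x := 0); rewrite normr0 (lin0 hf.1) normr0.
by apply.
Qed.

Lemma opnormP f : blin f -> forall x, `|f x| <= opnorm f * `|x|.
Proof.
move=> hf x; have [->|x0] := eqVneq x 0.
  by rewrite (lin0 hf.1) !normr0 mulr0.
have nx : 0 < `|x| by rewrite normr_gt0.
have := opnorm_ub hf (x := `|x|^-1 *: x).
rewrite (linZ hf.1) !normrZ normfV normr_id mulVf ?gt_eqF // lexx => /(_ isT).
by move=> h; rewrite -ler_pdivrMr // mulrC.
Qed.

Lemma opnorm_le_bound f c : blin f -> (forall x, `|f x| <= c * `|x|) -> 0 <= c -> opnorm f <= c.
Proof.
move=> hf H c0; apply: opnorm_le => x x1; apply: (le_trans (H x)).
by rewrite -[leRHS]mulr1 ler_wpM2l.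
Qed.

Lemma blin_opnorm f : blin f -> forall x, `|x| <= 1 -> `|f x| <= opnorm f.
Proof. exact: opnorm_ub. Qed.

Lemma blin0 : blin (0 : V -> V).
Proof. split; first by move=> a u v /=; rewrite scaler0 addr0.
by exists 0; split => // x; rewrite normr0 mul0r. Qed.

Lemma blinD f g : blin f -> blin g -> blin (f + g).
Proof.
move=> [lf [M [M0 fM]]] [lg [N [N0 gN]]]; split.
  by move=> a u v; rewrite !addrfctE /= lf lg scalerDr; rewrite !addrA; congr (_ + _);
     rewrite -!addrA; congr (_ + _); rewrite addrC.
exists (M + N); split; first by rewrite addr_ge0.
by move=> x; rewrite addrfctE /= mulrDl (le_trans (ler_normD _ _)) // lerD.
Qed.

Lemma blinN f : blin f -> blin (- f).
Proof.
move=> [lf [M [M0 fM]]]; split.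
  by move=> a u v; rewrite !opprfctE /= lf opprD scalerN.
by exists M; split => // x; rewrite opprfctE /= normrN.
Qed.

Lemma blinB f g : blin f -> blin g -> blin (f - g).
Proof. by move=> hf hg; apply: blinD => //; apply: blinN. Qed.

Lemma blinC f g : blin f -> blin g -> blin (f \o g).
Proof.
move=> [lf [M [M0 fM]]] [lg [N [N0 gN]]]; split.
  by move=> a u v /=; rewrite lg lf.
exists (M * N); split; first by rewrite mulr_ge0.
by move=> x /=; rewrite (le_trans (fM _)) // -mulrA ler_wpM2l.
Qed.

Lemma blinid : blin (@id V).
Proof. by split => //; exists 1; split => // x; rewrite mul1r. Qed.

Lemma blinZ (r : R) f : blin f -> blin (r *: f).
Proof.
move=> [lf [M [M0 fM]]]; split.
  by move=> a u v; rewrite !scalrfctE /= lf scalerDr !scalerA mulrC.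
exists (`|r| * M); split; first by rewrite mulr_ge0.
by move=> x; rewrite scalrfctE /= normrZ -mulrA ler_wpM2l.
Qed.

Lemma opnormD f g : blin f -> blin g -> opnorm (f + g) <= opnorm f + opnorm g.
Proof.
move=> hf hg; apply: opnorm_le => x x1 /=.
by rewrite (le_trans (ler_normD _ _)) // lerD // opnorm_ub.
Qed.

Lemma opnormN f : blin f -> opnorm (- f) <= opnorm f.
Proof. by move=> hf; apply: opnorm_le => x x1 /=; rewrite normrN opnorm_ub. Qed.

Lemma opnormC f g : blin f -> blin g -> opnorm (f \o g) <= opnorm f * opnorm g.
Proof.
move=> hf hg; apply: opnorm_le => x x1 /=.
rewrite (le_trans (opnormP hf _)) // ler_wpM2l ?opnorm_ge0 // opnorm_ub //.
Qed.

Lemma opnormZ (r : R) f : blin f -> opnorm (r *: f) <= `|r| * opnorm f.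
Proof.
move=> hf; apply: opnorm_le => x x1 /=.
by rewrite normrZ ler_wpM2l // opnorm_ub.
Qed.

Lemma opnorm_id : opnorm (@id V) <= 1.
Proof. by apply: opnorm_le. Qed.

Lemma opnorm0 : opnorm (0 : V -> V) = 0.
Proof.
apply/eqP; rewrite eq_le opnorm_ge0 ?andbT; last exact: blin0.
by apply: opnorm_le => x _ /=; rewrite normr0.
Qed.
End Bop.

Section Aring.
Variables (R : realType) (V : normedModType R) (T : qop V).
Hypothesis hT : in_BC T.

Definition Tcomm (g : V -> V) := forall v,
  [/\ g (q0 T v) = q0 T (g v), g (q1 T v) = q1 T (g v),
      g (q2 T v) = q2 T (g v) & g (q3 T v) = q3 T (g v)].
Definition Ap (f : V -> V) := blin f /\
  forall g, blin g -> Tcomm g -> forall v, f (g v) = g (f v).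

Record A (h : in_BC T) := MkA { av : V -> V ; aP : Ap av }.
Local Notation AA := (A hT).

Lemma Aext (x y : AA) : av x = av y -> x = y.
Proof.
case: x => f fP; case: y => g gP /= e; subst g; congr MkA.
exact: Prop_irrelevance.
Qed.

HB.instance Definition _ := gen_eqMixin AA.
HB.instance Definition _ := gen_choiceMixin AA.

Lemma Ap0 : Ap 0.
Proof.
split; first exact: blin0.
by move=> g [lg _] _ v; rewrite /= (lin0 lg).
Qed.
Lemma ApD f g : Ap f -> Ap g -> Ap (f + g).
Proof.
move=> [bf cf] [bg cg]; split; first exact: blinD.
by move=> h bh th v; rewrite !addrfctE /= (linD bh.1) cf // cg.
Qed.
Lemma ApN f : Ap f -> Ap (- f).
Proof.
move=> [bf cf]; split; first exact: blinN.
by move=> h bh th v; rewrite !opprfctE /= (linN bh.1) cf.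
Qed.
Lemma ApC f g : Ap f -> Ap g -> Ap (f \o g).
Proof.
move=> [bf cf] [bg cg]; split; first exact: blinC.
by move=> h bh th v /=; rewrite cg // cf.
Qed.
Lemma Apid : Ap id.
Proof. by split; [exact: blinid|]. Qed.
Lemma ApZ (r : R) : Ap (r *: id).
Proof.
split; first exact/blinZ/blinid.
by move=> h bh th v; rewrite !scalrfctE /= (linZ bh.1).
Qed.

Definition a0 := @MkA hT _ Ap0.
Definition aadd (x y : AA) := @MkA hT _ (ApD (aP x) (aP y)).
Definition aopp (x : AA) := @MkA hT _ (ApN (aP x)).
Definition amul (x y : AA) := @MkA hT _ (ApC (aP x) (aP y)).
Definition a1 := @MkA hT _ Apid.
Definition ac (r : R) := @MkA hT _ (ApZ r).

Lemma aaddA : associative aadd.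
Proof. by move=> x y z; apply: Aext; rewrite /= addrA. Qed.
Lemma aaddC : commutative aadd.
Proof. by move=> x y; apply: Aext; rewrite /= addrC. Qed.
Lemma aadd0 : left_id a0 aadd.
Proof. by move=> x; apply: Aext; rewrite /= add0r. Qed.
Lemma aaddN : left_inverse a0 aopp aadd.
Proof. by move=> x; apply: Aext; rewrite /= addNr. Qed.
HB.instance Definition _ := GRing.isZmodule.Build AA aaddA aaddC aadd0 aaddN.

Lemma Tcomm_av (x : AA) : Tcomm (av x).
Proof.
have [b0 b1 b2 b3 hc] := hT.
have hTi : forall f, f \in [:: q0 T; q1 T; q2 T; q3 T] -> blin f /\ Tcomm f.
  move=> f fin; split.
    by move: fin; rewrite !inE => /or4P [] /eqP ->; apply: bounded_op_blin.
  move=> v; split; apply: (congr1 (fun F => F v) (hc f _ fin _)); by rewrite !inE eqxx ?orbT.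
move=> v; have [_ cx] := aP x.
split; apply: cx; try (apply: (proj1 (hTi _ _)); by rewrite !inE eqxx ?orbT);
  apply: (proj2 (hTi _ _)); by rewrite !inE eqxx ?orbT.
Qed.

Lemma amulA : associative amul.
Proof. by move=> x y z; apply: Aext. Qed.
Lemma amulC : commutative amul.
Proof.
move=> x y; apply: Aext; apply/funext => v /=.
have [_ cx] := aP x; apply: cx; [exact: (aP y).1 | exact: Tcomm_av].
Qed.
Lemma amul1 : left_id a1 amul.
Proof. by move=> x; apply: Aext. Qed.
Lemma amulDl : left_distributive amul aadd.
Proof. by move=> x y z; apply: Aext. Qed.
HB.instance Definition _ := GRing.Zmodule_isComPzRing.Build AA amulA amulC amul1 amulDl.

Lemma avD (x y : AA) : av (x + y) = av x + av y. Proof. by []. Qed.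
Lemma avN (x : AA) : av (- x) = - av x. Proof. by []. Qed.
Lemma avB (x y : AA) : av (x - y) = av x - av y. Proof. by []. Qed.
Lemma avM (x y : AA) : av (x * y) = av x \o av y. Proof. by []. Qed.
Lemma av1 : av 1 = id. Proof. by []. Qed.
Lemma av0 : av 0 = 0. Proof. by []. Qed.

Lemma acD r q : ac (r + q) = ac r + ac q.
Proof. by apply: Aext; apply/funext => v; rewrite /= !scalrfctE /= scalerDl. Qed.
Lemma acN r : ac (- r) = - ac r.
Proof. by apply: Aext; apply/funext => v; rewrite /= !scalrfctE /= scaleNr. Qed.
Lemma acB r q : ac (r - q) = ac r - ac q.
Proof. by rewrite acD acN. Qed.
Lemma acM r q : ac (r * q) = ac r * ac q.
Proof. by apply: Aext; apply/funext => v; rewrite /= !scalrfctE /= scalerA. Qed.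
Lemma ac1 : ac 1 = 1.
Proof. by apply: Aext; apply/funext => v; rewrite /= !scalrfctE /= scale1r. Qed.
Lemma ac0 : ac 0 = 0.
Proof. by apply: Aext; apply/funext => v; rewrite /= !scalrfctE /= scale0r. Qed.
Lemma av_acl r (x : AA) : av (ac r * x) = r *: av x.
Proof. by []. Qed.
Lemma av_acr r (x : AA) : av (x * ac r) = r *: av x.
Proof. by rewrite mulrC. Qed.
End Aring.

Section QR.
Variable K : comPzRingType.
Definition QA := quat K.
HB.instance Definition _ := gen_eqMixin QA.
HB.instance Definition _ := gen_choiceMixin QA.
Definition qz : QA := Quat 0 0 0 0.
Definition qa (p q : QA) : QA := qadd p q.
Definition qo (p : QA) : QA := qopp p.
Lemma qaA : associative qa.
Proof. by case=> ????[????][????]; rewrite /qa/qadd/=; congr Quat; ring. Qed.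
Lemma qaC : commutative qa.
Proof. by case=> ????[????]; rewrite /qa/qadd/=; congr Quat; ring. Qed.
Lemma qa0 : left_id qz qa.
Proof. by case=> ????; rewrite /qa/qadd/=; congr Quat; ring. Qed.
Lemma qaN : left_inverse qz qo qa.
Proof. by case=> ????; rewrite /qa/qadd/=; congr Quat; ring. Qed.
HB.instance Definition _ := GRing.isZmodule.Build QA qaA qaC qa0 qaN.
Definition qone : QA := Quat 1 0 0 0.
Definition qm (p q : QA) : QA := qmulG (fun a b : K => a * b) p q.
Lemma qmA : associative qm.
Proof. by case=> ????[????][????]; rewrite /qm/qmulG/=; congr Quat; ring. Qed.
Lemma qm1 : left_id qone qm.
Proof. by case=> ????; rewrite /qm/qmulG/=; congr Quat; ring. Qed.
Lemma qm1r : right_id qone qm.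
Proof. by case=> ????; rewrite /qm/qmulG/=; congr Quat; ring. Qed.
Lemma qmDl : left_distributive qm qa.
Proof. by case=> ????[????][????]; rewrite /qm/qa/qadd/qmulG/=; congr Quat; ring. Qed.
Lemma qmDr : right_distributive qm qa.
Proof. by case=> ????[????][????]; rewrite /qm/qa/qadd/qmulG/=; congr Quat; ring. Qed.
HB.instance Definition _ := GRing.Zmodule_isPzRing.Build QA qmA qm1 qm1r qmDl qmDr.

Lemma qmE (p q : QA) : p * q = qm p q. Proof. by []. Qed.
Lemma q0D (p q : QA) : q0 (p + q) = q0 p + q0 q. Proof. by []. Qed.
Lemma q1D (p q : QA) : q1 (p + q) = q1 p + q1 q. Proof. by []. Qed.
Lemma q2D (p q : QA) : q2 (p + q) = q2 p + q2 q. Proof. by []. Qed.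
Lemma q3D (p q : QA) : q3 (p + q) = q3 p + q3 q. Proof. by []. Qed.

Lemma qsumE m n (F : nat -> QA) : qsum m n F = \sum_(m <= i < n) F i.
Proof.
rewrite /qsum; case E: (\sum_(m <= i < n) F i) => [x0 x1 x2 x3].
have h (f : QA -> K) : f 0 = 0 -> (forall p q, f (p + q) = f p + f q) ->
  f (\sum_(m <= i < n) F i) = \sum_(m <= i < n) f (F i).
  by move=> f0 fD; apply: (big_morph f fD f0).
congr Quat.
- by have := h _ (erefl (q0 (0:QA))) q0D; rewrite E.
- by have := h _ (erefl (q1 (0:QA))) q1D; rewrite E.
- by have := h _ (erefl (q2 (0:QA))) q2D; rewrite E.
- by have := h _ (erefl (q3 (0:QA))) q3D; rewrite E.
Qed.

Definition sc (x : K) : QA := Quat x 0 0 0.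
Lemma scC x (p : QA) : sc x * p = p * sc x.
Proof. by case: p => ????; rewrite !qmE /qm/qmulG/=; congr Quat; ring. Qed.
Lemma scB x y : sc (x - y) = sc x - sc y.
Proof. by rewrite /sc; congr Quat => /=; ring. Qed.
Lemma scM x y : sc (x * y) = sc x * sc y.
Proof. by rewrite qmE /qm/qmulG/=; congr Quat; ring. Qed.
Lemma sc1 : sc 1 = 1. Proof. by []. Qed.
Lemma sc0 : sc 0 = 0. Proof. by []. Qed.

Definition tra (t : QA) := q0 t + q0 t.
Definition tnr (t : QA) := q0 t * q0 t + q1 t * q1 t + q2 t * q2 t + q3 t * q3 t.
Lemma conj_add (t : QA) : t + (qconj t : QA) = sc (tra t).
Proof. by case: t => ????; rewrite /tra /sc; congr Quat => /=; ring. Qed.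
Lemma conj_mul (t : QA) : t * (qconj t : QA) = sc (tnr t).
Proof. by case: t => ????; rewrite qmE /qm /qmulG /tnr /sc; congr Quat => /=; ring. Qed.
Lemma conj_mul' (t : QA) : (qconj t : QA) * t = sc (tnr t).
Proof. by case: t => ????; rewrite qmE /qm /qmulG /tnr /sc; congr Quat => /=; ring. Qed.

Lemma qpowE (p : QA) n : iter n (fun q => p * q) 1 = p ^+ n.
Proof. by elim: n => [|n IH] //=; rewrite IH exprS. Qed.

Section Hm.
Variables (t : QA) (a b : K).
Let tb : QA := qconj t.
Hypotheses (ha : t + tb = sc a) (hb : t * tb = sc b) (hb' : tb * t = sc b).

Definition hm m := \sum_(1 <= k < m.+1) t ^+ (m - k) * tb ^+ (k - 1).

Lemma hmS m : hm m.+1 = t * hm m + tb ^+ m.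
Proof.
rewrite /hm big_nat_recr //= subnn expr0 mul1r subn1 /=; congr (_ + _).
rewrite mulr_sumr; apply: eq_big_nat => k /andP [_ km].
by rewrite subSn // exprS mulrA.
Qed.

Lemma hm_rec m : hm m.+2 = sc a * hm m.+1 - sc b * hm m.
Proof.
rewrite (hmS m.+1) -ha -hb' mulrDl -addrA; congr (_ + _).
rewrite (hmS m) mulrDr !mulrA [X in X - _]addrC -addrA subrr addr0.
by rewrite -exprS.
Qed.

Fixpoint etap m : K * K := if m is m'.+1 then
  ((etap m').2, a * (etap m').2 - b * (etap m').1) else (0, 1).
Definition etaq m := (etap m).1.
Lemma etaq0 : etaq 0 = 0. Proof. by []. Qed.
Lemma etaq1 : etaq 1 = 1. Proof. by []. Qed.
Lemma etaqSS m : etaq m.+2 = a * etaq m.+1 - b * etaq m. Proof. by []. Qed.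

Lemma hm_eta m : hm m = sc (etaq m).
Proof.
suff : hm m = sc (etaq m) /\ hm m.+1 = sc (etaq m.+1) by case.
elim: m => [|m [IH1 IH2]].
  by split; rewrite /hm; [rewrite big_geq | rewrite big_nat1 !expr0 mulr1].
by split => //; rewrite hm_rec IH1 IH2 etaqSS scB !scM.
Qed.
End Hm.

Lemma zid (Z : zmodType) (o x y z w : Z) : o - x + y + (x - z + w) = o - (z - y) + w.
Proof. by rewrite opprB !addrA; congr (_ + _); rewrite (addrAC (o - x)) subrK. Qed.

Section Tele.
Variables (S U : QA) (a b : K).
Hypotheses (SU : S * U = 1) (US : U * S = 1).
Definition Qa := S * S - S * sc a + sc b.
Definition FF N := \sum_(1 <= m < N.+1) sc (etaq a b m) * U ^+ m.+1.

Lemma SUk k : S * U ^+ k.+1 = U ^+ k.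
Proof. by rewrite exprS mulrA SU mul1r. Qed.

Lemma QU n : Qa * U ^+ n.+2 = U ^+ n - sc a * U ^+ n.+1 + sc b * U ^+ n.+2.
Proof.
by rewrite /Qa -(scC a S) mulrDl mulrBl -!mulrA !SUk.
Qed.

Lemma QF N : Qa * FF N = 1 - sc (etaq a b N.+1) * U ^+ N + sc (b * etaq a b N) * U ^+ N.+1.
Proof.
elim: N => [|N IH].
  by rewrite /FF big_geq // mulr0 etaq1 etaq0 mulr0 sc0 mul0r addr0 sc1 expr0 mulr1 subrr.
rewrite /FF big_nat_recr //= -/(FF N) mulrDr IH mulrA -scC -mulrA QU.
rewrite mulrDr mulrBr !mulrA -!scM zid etaqSS -mulrBl -scB.
by rewrite (mulrC (etaq a b N.+1) a) (mulrC (etaq a b N.+1) b).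
Qed.

Lemma commSU : GRing.comm S U.
Proof. by rewrite /GRing.comm SU US. Qed.

Lemma commQa_FF N : GRing.comm Qa (FF N).
Proof.
apply: commr_sum => m _; apply: commrM.
  by rewrite /GRing.comm scC.
apply: commrX; apply/commr_sym; rewrite /Qa; apply: commrD; [apply: commrB|].
- by apply: commrM; apply/commr_sym/commSU.
- apply: commrM; first by apply/commr_sym/commSU.
  by rewrite /GRing.comm scC.
- by rewrite /GRing.comm scC.
Qed.
End Tele.
End QR.

Section Sq.
Variables (R : comPzRingType) (V : lmodType R).
Record Sq := MkSq { sq1 : R ; sq2 : V }.
HB.instance Definition _ := gen_eqMixin Sq.
HB.instance Definition _ := gen_choiceMixin Sq.
Definition sq0 := MkSq 0 0.
Definition sqadd x y := MkSq (sq1 x + sq1 y) (sq2 x + sq2 y).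
Definition sqopp x := MkSq (- sq1 x) (- sq2 x).
Lemma sqaddA : associative sqadd.
Proof. by move=> [? ?] [? ?] [? ?]; rewrite /sqadd /= !addrA. Qed.
Lemma sqaddC : commutative sqadd.
Proof. by move=> [a u] [b v]; rewrite /sqadd /= (addrC a) (addrC u). Qed.
Lemma sqadd0 : left_id sq0 sqadd.
Proof. by move=> [? ?]; rewrite /sqadd /= !add0r. Qed.
Lemma sqaddN : left_inverse sq0 sqopp sqadd.
Proof. by move=> [? ?]; rewrite /sqadd /= !addNr. Qed.
HB.instance Definition _ := GRing.isZmodule.Build Sq sqaddA sqaddC sqadd0 sqaddN.
Definition sq1e := MkSq 1 0.
Definition sqmul x y := MkSq (sq1 x * sq1 y) (sq1 x *: sq2 y + sq1 y *: sq2 x).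
Lemma sqmulA : associative sqmul.
Proof.
move=> [a u] [b v] [c w]; rewrite /sqmul /= mulrA; congr MkSq.
rewrite !scalerDr !scalerA addrA [c * a]mulrC [c * b]mulrC [b * c]mulrC.
by rewrite -!addrA; congr (_ + _); rewrite addrC.
Qed.
Lemma sqmulC : commutative sqmul.
Proof. by move=> [a u] [b v]; rewrite /sqmul /= mulrC addrC. Qed.
Lemma sqmul1 : left_id sq1e sqmul.
Proof. by move=> [a u]; rewrite /sqmul /= mul1r scale1r scaler0 addr0. Qed.
Lemma sqmulDl : left_distributive sqmul sqadd.
Proof.
move=> [a u] [b v] [c w]; rewrite /sqmul /sqadd /= mulrDl; congr MkSq.
rewrite scalerDl scalerDr -!addrA; congr (_ + _).
by rewrite addrCA.
Qed.
HB.instance Definition _ := GRing.Zmodule_isComPzRing.Build Sq sqmulA sqmulC sqmul1 sqmulDl.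

Definition sqi (v : V) : Sq := MkSq 0 v.
Lemma sqiD u v : sqi (u + v) = sqi u + sqi v.
Proof. by rewrite /sqi; congr MkSq => /=; rewrite addr0. Qed.
Lemma sqiN u : sqi (- u) = - sqi u.
Proof. by rewrite /sqi; congr MkSq => /=; rewrite oppr0. Qed.
Lemma sqiB u v : sqi (u - v) = sqi u - sqi v.
Proof. by rewrite sqiD sqiN. Qed.
Lemma sqi_inj : injective sqi.
Proof. by move=> u v []. Qed.
End Sq.

Ltac zmod_ring := apply: sqi_inj; rewrite ?(sqiB, sqiD, sqiN); ring.


Section Link.
Variables (R : realType) (V : normedModType R) (T : qop V).
Hypothesis hT : in_BC T.
Local Notation K := (A hT).
Local Notation QK := (QA K).

Lemma ApT f : f \in [:: q0 T; q1 T; q2 T; q3 T] -> Ap T f.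
Proof.
move=> fin; split.
  by case: hT => b0 b1 b2 b3 _; move: fin; rewrite !inE => /or4P [] /eqP ->;
     apply: bounded_op_blin.
move=> g bg tg v; have [h0 h1 h2 h3] := tg v.
by move: fin; rewrite !inE => /or4P [] /eqP ->.
Qed.

Lemma in0 : q0 T \in [:: q0 T; q1 T; q2 T; q3 T]. Proof. by rewrite !inE eqxx. Qed.
Lemma in1 : q1 T \in [:: q0 T; q1 T; q2 T; q3 T]. Proof. by rewrite !inE eqxx ?orbT. Qed.
Lemma in2 : q2 T \in [:: q0 T; q1 T; q2 T; q3 T]. Proof. by rewrite !inE eqxx ?orbT. Qed.
Lemma in3 : q3 T \in [:: q0 T; q1 T; q2 T; q3 T]. Proof. by rewrite !inE eqxx ?orbT. Qed.
Definition tA : QK := Quat (@MkA _ _ _ hT _ (ApT in0)) (@MkA _ _ _ hT _ (ApT in1)) (@MkA _ _ _ hT _ (ApT in2)) (@MkA _ _ _ hT _ (ApT in3)).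

Definition mv (p : QK) : qop V := Quat (av (q0 p)) (av (q1 p)) (av (q2 p)) (av (q3 p)).

Lemma qeta (B : Type) (X : quat B) : X = Quat (q0 X) (q1 X) (q2 X) (q3 X).
Proof. by case: X. Qed.
Lemma mvT : mv tA = T. Proof. by rewrite [RHS]qeta. Qed.
Lemma mv_mul p q : qop_mul (mv p) (mv q) = mv (p * q). Proof. by []. Qed.
Lemma mv_add p q : qadd (mv p) (mv q) = mv (p + q). Proof. by []. Qed.
Lemma mv_sub p q : qsub (mv p) (mv q) = mv (p - q). Proof. by []. Qed.
Lemma mv_conj p : qconj (mv p) = mv (qconj p). Proof. by []. Qed.
Lemma mv1 : qop_id V = mv 1. Proof. by []. Qed.
Lemma mv_pow p n : qop_pow (mv p) n = mv (p ^+ n).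
Proof. by rewrite /qop_pow -qpowE; elim: n => [|n IH] //=; rewrite IH. Qed.

Lemma av_sum m n (f : nat -> K) : av (\sum_(m <= i < n) f i) = \sum_(m <= i < n) av (f i).
Proof. exact: (big_morph _ (@avD _ _ _ hT) (@av0 _ _ _ hT)). Qed.

Lemma mv_sum m n (F : nat -> QK) : qsum m n (fun i => mv (F i)) = mv (\sum_(m <= i < n) F i).
Proof. by rewrite -qsumE /mv /qsum /=; congr Quat; rewrite av_sum. Qed.

Local Notation acc := (ac hT).
Definition cq (w : H R) : QK := Quat (acc (q0 w)) (acc (q1 w)) (acc (q2 w)) (acc (q3 w)).

Lemma cqM p q : cq (hmul p q) = cq p * cq q.
Proof.
by rewrite /cq /hmul qmE /qm /qmulG /=; congr Quat; rewrite ?acB ?acD ?acN ?acM.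
Qed.
Lemma cq1 : cq (hone R) = 1.
Proof. by rewrite /cq /=; congr Quat; rewrite ?ac1 ?ac0. Qed.
Lemma cq_pow p n : cq (hpow p n) = cq p ^+ n.
Proof. by elim: n => [|n IH]; rewrite ?cq1 // exprS -IH -cqM. Qed.

Lemma avc (x : K) (r : R) : av x \o (r *: id) = r *: av x.
Proof. by apply/funext => v; rewrite /= (linZ (aP x).1.1). Qed.

Lemma mv_qh p w : qoph_mul (mv p) w = mv (p * cq w).
Proof. by rewrite /qoph_mul /mv qmE /qm /qmulG /=; congr Quat; rewrite !avc. Qed.
Lemma mv_hq p w : hqop_mul w (mv p) = mv (cq w * p).
Proof. by rewrite /hqop_mul /mv qmE /qm /qmulG /=; congr Quat; rewrite ?avB ?avD ?av_acl. Qed.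

Definition Qk (s : H R) : QK := Qa (cq s) (tra tA) (tnr tA).

Lemma QcsE s : Qcs T s = mv (Qk s).
Proof.
rewrite /Qcs -mvT mv1 mv_conj mv_add mv_hq mv_hq mv_sub mv_mul mv_add.
by rewrite cqM mulr1 conj_add conj_mul.
Qed.

Definition tbar : QK := qconj tA.
Lemma hm_tA m : hm tA m = sc (etaq (tra tA) (tnr tA) m).
Proof. exact: (hm_eta (conj_add tA) (conj_mul' tA)). Qed.

Lemma inner_right (s : H R) m :
  qsum 1 m.+1 (fun k => qoph_mul (qop_mul (qop_pow T (m - k)) (qop_pow (qconj T) (k - 1)))
             (hpow (hinv s) m.+1))
  = mv (sc (etaq (tra tA) (tnr tA) m) * cq (hinv s) ^+ m.+1).
Proof.
have -> : (fun k => qoph_mul (qop_mul (qop_pow T (m - k)) (qop_pow (qconj T) (k - 1)))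
             (hpow (hinv s) m.+1)) =
   (fun k => mv (tA ^+ (m - k) * (qconj tA : QK) ^+ (k - 1) * cq (hpow (hinv s) m.+1))).
  by apply/funext => k; rewrite -mv_qh -mv_mul -!mv_pow -mv_conj mvT.
by rewrite mv_sum -mulr_suml -/(hm tA m) hm_tA cq_pow.
Qed.

Lemma inner_left (s : H R) m :
  qsum 1 m.+1 (fun k => hqop_mul (hpow (hinv s) m.+1)
             (qop_mul (qop_pow T (m - k)) (qop_pow (qconj T) (k - 1))))
  = mv (sc (etaq (tra tA) (tnr tA) m) * cq (hinv s) ^+ m.+1).
Proof.
have -> : (fun k => hqop_mul (hpow (hinv s) m.+1)
             (qop_mul (qop_pow T (m - k)) (qop_pow (qconj T) (k - 1)))) =
   (fun k => mv (cq (hpow (hinv s) m.+1) * (tA ^+ (m - k) * (qconj tA : QK) ^+ (k - 1)))).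
  by apply/funext => k; rewrite -mv_hq -mv_mul -!mv_pow -mv_conj mvT.
by rewrite mv_sum -mulr_sumr -/(hm tA m) hm_tA cq_pow scC.
Qed.

Lemma series_rightE s N :
  series_right T s N = mv (FF (cq (hinv s)) (tra tA) (tnr tA) N).
Proof.
rewrite /series_right.
have -> : (fun m => qsum 1 m.+1 (fun k => qoph_mul (qop_mul (qop_pow T (m - k)) (qop_pow (qconj T) (k - 1)))
             (hpow (hinv s) m.+1))) = fun m => mv (sc (etaq (tra tA) (tnr tA) m) * cq (hinv s) ^+ m.+1).
  by apply/funext => m; apply: inner_right.
by rewrite mv_sum.
Qed.

Lemma series_leftE s N :
  series_left T s N = mv (FF (cq (hinv s)) (tra tA) (tnr tA) N).
Proof.
rewrite /series_left.
have -> : (fun m => qsum 1 m.+1 (fun k => hqop_mul (hpow (hinv s) m.+1)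
             (qop_mul (qop_pow T (m - k)) (qop_pow (qconj T) (k - 1))))) =
  fun m => mv (sc (etaq (tra tA) (tnr tA) m) * cq (hinv s) ^+ m.+1).
  by apply/funext => m; apply: inner_left.
by rewrite mv_sum.
Qed.

Lemma apply_mv p q x : qop_apply (mv p) (qop_apply (mv q) x) = qop_apply (mv (p * q)) x.
Proof.
rewrite /qop_apply /mv qmE /qm /qmulG /=.

rewrite !(linB (aP _).1.1, linD (aP _).1.1).
by congr Quat; zmod_ring.
Qed.

Lemma apply_mv1 x : qop_apply (mv 1) x = x.
Proof.
rewrite /qop_apply /mv /=; case: x => x0 x1 x2 x3 /=.
by congr Quat; rewrite ?subr0 ?sub0r ?addr0 ?add0r.
Qed.
End Link.

Section Hinv.
Variable R : realType.
Lemma habs2 (s : H R) : habs s ^+ 2 = q0 s ^+ 2 + q1 s ^+ 2 + q2 s ^+ 2 + q3 s ^+ 2.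
Proof. by rewrite /habs sqr_sqrtr // !addr_ge0 // sqr_ge0. Qed.

Lemma hmul_inv (s : H R) : habs s != 0 -> hmul s (hinv s) = hone R.
Proof.
move=> hs; have n0 : habs s ^+ 2 != 0 by rewrite expf_neq0.
move: n0; rewrite /hinv habs2 => n0.
by rewrite /hmul /qmulG /hone /=; congr Quat; field.
Qed.
Lemma hinv_mul (s : H R) : habs s != 0 -> hmul (hinv s) s = hone R.
Proof.
move=> hs; have n0 : habs s ^+ 2 != 0 by rewrite expf_neq0.
move: n0; rewrite /hinv habs2 => n0.
by rewrite /hmul /qmulG /hone /=; congr Quat; field.
Qed.
End Hinv.

Section Norms.
Variables (R : realType) (V : normedModType R) (T : qop V).
Hypothesis hT : in_BC T.
Local Notation K := (A hT).
Local Notation QK := (QA K).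

Definition nA (x : K) := opnorm (av x).
Lemma bA (x : K) : blin (av x). Proof. exact: (aP x).1. Qed.
Lemma nA_ge0 x : 0 <= nA x. Proof. exact/opnorm_ge0/bA. Qed.
Lemma nAD x y : nA (x + y) <= nA x + nA y. Proof. exact: opnormD (bA x) (bA y). Qed.
Lemma nAN x : nA (- x) <= nA x. Proof. exact: opnormN (bA x). Qed.
Lemma nAB x y : nA (x - y) <= nA x + nA y.
Proof. by rewrite (le_trans (nAD _ _)) // lerD // nAN. Qed.
Lemma nAM x y : nA (x * y) <= nA x * nA y. Proof. exact: opnormC (bA x) (bA y). Qed.
Lemma nA1 : nA 1 <= 1. Proof. exact: opnorm_id. Qed.
Lemma nA0 : nA 0 = 0. Proof. exact: opnorm0. Qed.
Lemma nA_acl r x : nA (ac hT r * x) <= `|r| * nA x.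
Proof. by rewrite /nA av_acl; apply: opnormZ (bA x). Qed.
Lemma nA_eq0 x : nA x <= 0 -> x = 0.
Proof.
move=> h; apply: Aext; apply/funext => v; apply/eqP; rewrite /= -normr_le0.
by rewrite (le_trans (opnormP (bA x) v)) // mulr_le0_ge0.
Qed.

Definition qn (p : QK) := nA (q0 p) + nA (q1 p) + nA (q2 p) + nA (q3 p).
Lemma qn_mv p : qopnorm (mv p) = qn p. Proof. by []. Qed.
Lemma qn_ge0 p : 0 <= qn p. Proof. by rewrite /qn !addr_ge0 ?nA_ge0. Qed.
Lemma qnD p q : qn (p + q) <= qn p + qn q.
Proof.
rewrite /qn; apply: le_trans; first by apply: lerD; [apply: lerD; [apply: lerD|]|]; apply: nAD.
by rewrite le_eqVlt; apply/orP; left; apply/eqP; ring.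
Qed.
Lemma qnN p : qn (- p) <= qn p.
Proof. by rewrite /qn; apply: lerD; [apply: lerD; [apply: lerD|]|]; apply: nAN. Qed.
Lemma qnB p q : qn (p - q) <= qn p + qn q.
Proof. by rewrite (le_trans (qnD _ _)) // lerD // qnN. Qed.
Lemma qn_eq0 p : qn p <= 0 -> p = 0.
Proof.
move=> h; have := qn_ge0 p; rewrite /qn in h * => _.
have h0 := nA_ge0 (q0 p); have h1 := nA_ge0 (q1 p).
have h2 := nA_ge0 (q2 p); have h3 := nA_ge0 (q3 p).
case: p h h0 h1 h2 h3 => p0 p1 p2 p3 /= h h0 h1 h2 h3.
by congr Quat; apply: nA_eq0; lra.
Qed.

Ltac nb := first [ apply: (le_trans (nAB _ _)); apply: lerD; nb
                 | apply: (le_trans (nAD _ _)); apply: lerD; nb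
                 | apply: nAM ].

Lemma qnM p q : qn (p * q) <= qn p * qn q.
Proof.
rewrite /qn qmE /qm /qmulG /=.
apply: le_trans; first by apply: lerD; [apply: lerD; [apply: lerD|]|]; nb.
by rewrite le_eqVlt; apply/orP; left; apply/eqP; ring.
Qed.
Lemma qn1 : qn 1 <= 1.
Proof. by rewrite /qn /= nA0 !addr0 nA1. Qed.
Lemma qn_pow p n : qn (p ^+ n) <= qn p ^+ n.
Proof.
elim: n => [|n IH]; first by rewrite !expr0 qn1.
by rewrite exprS (le_trans (qnM _ _)) // exprS ler_wpM2l ?qn_ge0.
Qed.
Lemma qn_conj p : qn (qconj p : QK) <= qn p.
Proof. by rewrite /qn /=; apply: lerD; [apply: lerD; [apply: lerD|]|]; rewrite ?lexx ?nAN. Qed.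
Lemma qn_sum m n (F : nat -> QK) : qn (\sum_(m <= i < n) F i) <= \sum_(m <= i < n) qn (F i).
Proof.
apply: (big_ind2 (fun x y => qn x <= y)).
- by rewrite /qn /= nA0 !addr0.
- by move=> x1 x2 y1 y2 h1 h2; rewrite (le_trans (qnD _ _)) // lerD.
- by move=> i _.
Qed.
Lemma qn_sc x : qn (sc x) = nA x.
Proof. by rewrite /qn /= nA0 !addr0. Qed.

Lemma sc_cq x w : sc x * cq hT w =
  Quat (ac hT (q0 w) * x) (ac hT (q1 w) * x) (ac hT (q2 w) * x) (ac hT (q3 w) * x).
Proof. by rewrite qmE /qm /qmulG /=; congr Quat; ring. Qed.

Lemma qn_sc_cq x w : qn (sc x * cq hT w) <=
  nA x * (`|q0 w| + `|q1 w| + `|q2 w| + `|q3 w|).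
Proof.
rewrite sc_cq /qn /=; apply: le_trans.
  by apply: lerD; [apply: lerD; [apply: lerD|]|]; apply: nA_acl.
by rewrite le_eqVlt; apply/orP; left; apply/eqP; ring.
Qed.
End Norms.

Section HQ.
Variable R : realType.
Implicit Types p q s w : H R.
Lemma habs_ge0 p : 0 <= habs p. Proof. exact: sqrtr_ge0. Qed.
Lemma habs_comp w : `|q0 w| + `|q1 w| + `|q2 w| + `|q3 w| <= 4 * habs w.
Proof.
have h0 := sqr_ge0 (q0 w); have h1 := sqr_ge0 (q1 w).
have h2 := sqr_ge0 (q2 w); have h3 := sqr_ge0 (q3 w).
have c0 : `|q0 w| <= habs w by rewrite -sqrtr_sqr /habs ler_wsqrtr //; lra.
have c1 : `|q1 w| <= habs w by rewrite -sqrtr_sqr /habs ler_wsqrtr //; lra.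
have c2 : `|q2 w| <= habs w by rewrite -sqrtr_sqr /habs ler_wsqrtr //; lra.
have c3 : `|q3 w| <= habs w by rewrite -sqrtr_sqr /habs ler_wsqrtr //; lra.
lra.
Qed.
Lemma habsM p q : habs (hmul p q) = habs p * habs q.
Proof.
rewrite /habs -sqrtrM; last by rewrite !addr_ge0 // sqr_ge0.
by congr Num.sqrt; rewrite /hmul /qmulG /=; ring.
Qed.
Lemma habs1 : habs (hone R) = 1.
Proof. by rewrite /habs /= expr1n !expr0n /= !addr0 sqrtr1. Qed.
Lemma habs_pow p n : habs (hpow p n) = habs p ^+ n.
Proof. by elim: n => [|n IH]; rewrite ?habs1 // exprS -IH -habsM. Qed.
Lemma habs_inv s : habs s != 0 -> habs (hinv s) = (habs s)^-1.
Proof.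
move=> hs; have := habsM (hinv s) s; rewrite hinv_mul // habs1 => e.
by rewrite -[RHS]mul1r e mulfK.
Qed.
End HQ.

Section Seqs.
Variable R : realType.

Lemma bern (d : R) n : 0 <= d -> 1 + n%:R * d <= (1 + d) ^+ n.
Proof.
move=> d0; elim: n => [|n IH]; first by rewrite mul0r addr0 expr0.
rewrite exprS -natr1 mulrDl mul1r.
have hn : 0 <= n%:R * d by rewrite mulr_ge0.
have hx : 0 <= (1 + d) ^+ n by rewrite exprn_ge0 // addr_ge0.
nra.
Qed.

Lemma mbound (r : R) : 0 <= r < 1 -> exists C, 0 <= C /\ forall m, m.+1%:R * r ^+ m <= C.
Proof.
move=> /andP [r0 r1]; have [->|rn0] := eqVneq r 0.
  exists 1; split => // m; case: m => [|m]; first by rewrite expr0 mulr1.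
  by rewrite expr0n /= mulr0.
have rp : 0 < r by rewrite lt_def rn0.
pose d := r^-1 - 1.
have d0 : 0 < d by rewrite /d subr_gt0 invf_gt1.
have e : r * (1 + d) = 1 by rewrite /d addrC subrK mulfV.
exists (1 + d^-1); split; first by rewrite addr_ge0 // invr_ge0 ltW.
move=> m; have hb := bern m (ltW d0).
have e2 : r ^+ m * (1 + d) ^+ m = 1 by rewrite -exprMn e expr1n.
have hr : 0 <= r ^+ m by rewrite exprn_ge0.
have h1 : m.+1%:R <= (1 + d^-1) * (1 + m%:R * d).
  have k : (1 + d^-1) * (1 + m%:R * d) = 1 + m%:R * d + d^-1 + m%:R.
    by field; rewrite gt_eqF.
  rewrite k -natr1.
  have : 0 <= d^-1 by rewrite invr_ge0 ltW.
  have : 0 <= m%:R * d by rewrite mulr_ge0 // ltW.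
  lra.
have hid : 0 <= 1 + d^-1 by rewrite addr_ge0 // invr_ge0 ltW.
apply: (le_trans (ler_wpM2r hr h1)).
have h2 : (1 + m%:R * d) * r ^+ m <= 1.
  by rewrite -[X in _ <= X]e2 mulrC ler_wpM2l.
by rewrite -mulrA (le_trans (ler_wpM2l hid h2)) // mulr1.
Qed.

Lemma mgeo (rho : R) : 0 <= rho < 1 -> exists th C,
  [/\ 0 < th, th < 1, 0 <= C & forall m, m.+1%:R * rho ^+ m <= C * th ^+ m].
Proof.
move=> /andP [r0 r1]; pose th := (1 + rho) / 2.
have th0 : 0 < th by rewrite /th divr_gt0 // ltr_pwDl.
have th1 : th < 1 by rewrite /th ltr_pdivrMr // mul1r; lra.
have rth : rho / th < 1 by rewrite ltr_pdivrMr // mul1r /th; lra.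
have [C [C0 HC]] := mbound (r := rho / th) (ltac:(by rewrite rth divr_ge0 // ltW)).
exists th, C; split => //.
move=> m; have e : rho ^+ m = (rho / th) ^+ m * th ^+ m.
  by rewrite expr_div_n divfK // expf_neq0 // gt_eqF.
by rewrite e mulrA ler_wpM2r // exprn_ge0 // ltW.
Qed.

Lemma geo_eq (th : R) M N : th != 1 -> (M <= N)%N ->
  \sum_(M.+1 <= m < N.+1) th ^+ m.-1 = (th ^+ M - th ^+ N) / (1 - th).
Proof.
move=> t1; elim: N => [|N IH] MN.
  by move: MN; rewrite leqn0 => /eqP ->; rewrite big_geq // subrr mul0r.
have h1 : 1 - th != 0 by rewrite subr_eq0 eq_sym.
case: (leqP M N) => MN'.
  by rewrite big_nat_recr //= IH // exprS; field.
have -> : M = N.+1 by apply/eqP; rewrite eqn_leq MN.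
by rewrite big_geq // subrr mul0r.
Qed.

Lemma geo_tail (th : R) M N : 0 <= th < 1 ->
  \sum_(M.+1 <= m < N.+1) th ^+ m.-1 <= th ^+ M / (1 - th).
Proof.
move=> /andP [t0 t1]; have tn1 : th != 1 by rewrite lt_eqF.
have pos : 0 < 1 - th by rewrite subr_gt0.
case: (leqP M N) => MN.
  rewrite geo_eq // ler_pM2r ?invr_gt0 // gerBl exprn_ge0 //.
rewrite big_geq; last by rewrite ltnS ltnW.
by rewrite divr_ge0 ?exprn_ge0 // ltW.
Qed.

Lemma le0_cvg (c : R) (e : nat -> R) : e @ \oo --> 0 -> (forall N, c <= e N) -> c <= 0.
Proof.
move=> ce hc; rewrite leNgt; apply/negP => c0.
have [M _ HM] : \forall M \near \oo, `|0 - e M| < c.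
  by move/cvgr_dist_lt : ce => /(_ _ c0).
have := HM M (leqnn M); rewrite sub0r normrN => /(le_lt_trans (ler_norm _)).
by rewrite ltNge hc.
Qed.

Lemma cvg_geo (C th : R) : 0 <= th < 1 -> (fun N => C * th ^+ N) @ \oo --> 0.
Proof.
move=> /andP [t0 t1]; rewrite -(mulr0 C); apply: cvgMl_tmp.
by apply: cvg_expr; rewrite ger0_norm.
Qed.

Lemma squeeze0 (f g : nat -> R) : (forall N, 0 <= f N <= g N) -> g @ \oo --> 0 -> f @ \oo --> 0.
Proof.
move=> h gc; apply: (@squeeze_cvgr _ _ _ _ (cst 0) g) => //; last exact: cvg_cst.
by near=> N; apply: h.
Unshelve. all: by end_near.
Qed.
End Seqs.

Section Lim.
Variables (R : realType) (V : completeNormedModType R).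

Lemma limop (g : nat -> V -> V) (d : nat -> R) :
  (forall N, blin (g N)) ->
  (forall M N, (M <= N)%N -> forall x, `|g N x - g M x| <= d M * `|x|) ->
  d @ \oo --> 0 -> (forall M, 0 <= d M) ->
  exists G, blin G /\ forall N x, `|g N x - G x| <= d N * `|x|.
Proof.
move=> bg hd d0 dpos.
have cv x : cvg (g ^~ x @ \oo).
  apply/cauchy_cvgP; apply: cauchy_exP => e e0.
  have ex0 : 0 < e / (`|x| + 1) by rewrite divr_gt0 // ltr_wpDl.
  have [M _ HM] : \forall M \near \oo, `|d M| < e / (`|x| + 1).
    by move/cvgr_dist_lt : d0 => /(_ _ ex0); apply: filterS => n; rewrite sub0r normrN.
  have HM' := HM M (leqnn M).
  exists (g M x); exists M => // n /= Mn; rewrite -ball_normE /ball_ /=.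
  rewrite distrC (le_lt_trans (hd M n Mn x)) //.
  rewrite ger0_norm // in HM'.
  have : d M * `|x| <= d M * (`|x| + 1) by rewrite ler_wpM2l // lerDl.
  move/le_lt_trans; apply; by rewrite -ltr_pdivlMr // ltr_wpDl.
pose G x := lim (g ^~ x @ \oo).
have GE x : g ^~ x @ \oo --> G x by apply: cv.
have bnd N x : `|g N x - G x| <= d N * `|x|.
  have c1 : (fun n => `|g N x - g n x|) @ \oo --> `|g N x - G x|.
    by apply: cvg_norm; apply: cvgB => //; apply: cvg_cst.
  rewrite -(cvg_lim _ c1) //; apply: limr_le; first by apply/cvg_ex; eexists; exact c1.
  near=> n; rewrite distrC hd //; near: n; by exists N.
exists G; split => //; split.
  move=> a u v; have [lg _] := bg 0%N.
  have c1 : (fun n => g n (a *: u + v)) @ \oo --> a *: G u + G v.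
    have -> : (fun n => g n (a *: u + v)) = (fun n => a *: g n u + g n v).
      by apply/funext => n; rewrite (bg n).1.
    by apply: cvgD => //; apply: cvgZl_tmp.
  exact: (cvg_unique _ (GE _) c1).
have [_ [M0 [M00 HM0]]] := bg 0%N.
exists (M0 + d 0%N); split; first by rewrite addr_ge0.
move=> x; have -> : G x = g 0%N x - (g 0%N x - G x) by rewrite opprB addrC subrK.
rewrite (le_trans (ler_normB _ _)) // mulrDl lerD //.
Unshelve. all: by end_near.
Qed.
End Lim.

Section Main.
Variables (R : realType) (V : completeNormedModType R) (T : qop V) (s : H R).
Hypotheses (hT : in_BC T) (hs : qopnorm T < habs s).
Local Notation K := (A hT).
Local Notation QK := (QA K).
Local Notation t := (tA hT).
Local Notation a := (tra (tA hT)).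
Local Notation b := (tnr (tA hT)).
Local Notation S := (cq hT s).
Local Notation U := (cq hT (hinv s)).
Local Notation tau := (qn (tA hT)).
Local Notation sig := ((habs s)^-1).

Lemma tauE : tau = qopnorm T.
Proof. by rewrite -qn_mv mvT. Qed.
Lemma tau_ge0 : 0 <= tau. Proof. exact: qn_ge0. Qed.
Lemma hs0 : 0 < habs s.
Proof. by rewrite (le_lt_trans _ hs) // -tauE tau_ge0. Qed.
Lemma SU : S * U = 1.
Proof. by rewrite -cqM hmul_inv ?cq1 // gt_eqF // hs0. Qed.
Lemma US : U * S = 1.
Proof. by rewrite -cqM hinv_mul ?cq1 // gt_eqF // hs0. Qed.
Lemma sig_ge0 : 0 <= sig. Proof. by rewrite invr_ge0 ltW // hs0. Qed.
Lemma rho01 : 0 <= tau * sig < 1.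
Proof.
rewrite mulr_ge0 ?tau_ge0 ?sig_ge0 //= ltr_pdivrMr ?hs0 // mul1r tauE //.
Qed.

Lemma qn_tb_pow j : qn ((qconj t : QK) ^+ j) <= tau ^+ j.
Proof.
elim: j => [|j IH]; first by rewrite !expr0 qn1.
rewrite !exprS (le_trans (qnM _ _)) // ler_pM ?qn_ge0 ?qn_conj //.
Qed.
Lemma qn_t_pow j : qn (t ^+ j) <= tau ^+ j.
Proof. exact: qn_pow. Qed.

Lemma eta_bound m : nA (etaq a b m) <= m%:R * tau ^+ m.-1.
Proof.
rewrite -qn_sc -hm_tA /hm (le_trans (qn_sum _ _ _)) //.
apply: (@le_trans _ _ (\sum_(1 <= k < m.+1) tau ^+ m.-1)).
  apply: ler_sum_nat => k /andP [k1 km].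
  rewrite (le_trans (qnM _ _)) // (le_trans (ler_pM (qn_ge0 _) (qn_ge0 _) (qn_t_pow _) (qn_tb_pow _))) //.
  by rewrite -exprD; have -> : (m - k + (k - 1) = m.-1)%N by lia.
by rewrite sumr_const_nat subn1 /= mulr_natl.
Qed.

Lemma U_pow_bound n x : qn (sc x * U ^+ n) <= nA x * (4 * sig ^+ n).
Proof.
rewrite -cq_pow (le_trans (qn_sc_cq _ _)) // ler_wpM2l ?nA_ge0 //.
by rewrite (le_trans (habs_comp _)) // habs_pow habs_inv // gt_eqF // hs0.
Qed.

Section Geo.
Variables (th C : R).
Hypotheses (th0 : 0 < th) (th1 : th < 1) (C0 : 0 <= C)
  (HC : forall m, m.+1%:R * (tau * sig) ^+ m <= C * th ^+ m).
Let B := 4 * sig ^+ 2 * C.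
Lemma B_ge0 : 0 <= B. Proof. by rewrite /B !mulr_ge0 // ?exprn_ge0 // ?sig_ge0. Qed.

Lemma term_bound m : qn (sc (etaq a b m) * U ^+ m.+1) <= B * th ^+ m.-1.
Proof.
case: m => [|j].
  rewrite /= sc0 mul0r /qn /= nA0 !addr0 mulr_ge0 ?B_ge0 //.
rewrite (le_trans (U_pow_bound _ _)) //.
apply: le_trans (ler_wpM2r _ (eta_bound _)) _.
  by rewrite mulr_ge0 // exprn_ge0 // sig_ge0.
have -> : j.+1%:R * tau ^+ j.+1.-1 * (4 * sig ^+ j.+2) =
          4 * sig ^+ 2 * (j.+1%:R * (tau * sig) ^+ j).
  by rewrite /= exprMn !exprS expr0; ring.
rewrite /B -!mulrA /= !ler_wpM2l // ?exprn_ge0 ?sig_ge0 //.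
Qed.

Definition dd M := B * th ^+ M / (1 - th).
Lemma dd_ge0 M : 0 <= dd M.
Proof.
rewrite /dd; apply: divr_ge0; last by rewrite subr_ge0 ltW.
by apply: mulr_ge0; [exact: B_ge0 | rewrite exprn_ge0 // ltW].
Qed.
Lemma dd_cvg : dd @ \oo --> 0.
Proof.
have -> : dd = (fun N => (B / (1 - th)) * th ^+ N).
  by apply/funext => N; rewrite /dd mulrAC.
by apply: cvg_geo; rewrite ltW.
Qed.

Lemma FF_diff M N : (M <= N)%N -> qn (FF U a b N - FF U a b M) <= dd M.
Proof.
move=> MN; rewrite /FF (big_cat_nat _ (n := M.+1)) //= addrAC subrr add0r.
rewrite (le_trans (qn_sum _ _ _)) //.
apply: (@le_trans _ _ (\sum_(M.+1 <= m < N.+1) B * th ^+ m.-1)).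
  by apply: ler_sum_nat => m _; apply: term_bound.
rewrite -mulr_sumr /dd -mulrA ler_wpM2l ?B_ge0 // geo_tail //.
by rewrite ltW.
Qed.

Lemma comp_lim (pi : QK -> K) :
  (forall p q, pi (p - q) = pi p - pi q) -> (forall p, nA (pi p) <= qn p) ->
  exists l : K, forall N, nA (pi (FF U a b N) - l) <= dd N.
Proof.
move=> piB pin.
pose g N := av (pi (FF U a b N)).
have bg N : blin (g N) by apply: bA.
have hd M N : (M <= N)%N -> forall x, `|g N x - g M x| <= dd M * `|x|.
  move=> MN x; have h2 := le_trans (pin _) (FF_diff MN).
  move: h2; rewrite piB => h2.
  have := opnormP (bA (pi (FF U a b N) - pi (FF U a b M))) x.
  move=> h; apply: le_trans h _; apply: ler_wpM2r => //.
have [G [bG HG]] := limop bg hd dd_cvg dd_ge0.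
have ApG : Ap T G.
  split => // h bh tch v.
  have [Mh [Mh0 hMh]] := bh.2.
  apply/eqP; rewrite -subr_eq0 -normr_le0.
  apply: (@le0_cvg _ _ (fun N => dd N * (`|h v| + Mh * `|v|))).
    rewrite -(mul0r (`|h v| + Mh * `|v|)); apply: cvgMr_tmp; exact: dd_cvg.
  move=> N.
  have gc : g N (h v) = h (g N v) by apply: (aP (pi (FF U a b N))).2.
  have e1 : G (h v) - h (G v) = (G (h v) - g N (h v)) + (h (g N v) - h (G v)).
    by rewrite gc addrA subrK.
  rewrite e1 (le_trans (ler_normD _ _)) // mulrDr lerD //.
    by rewrite distrC HG.
  rewrite -(linB bh.1) (le_trans (hMh _)) // mulrCA ler_wpM2l //.
exists (@MkA _ _ _ hT G ApG) => N.
rewrite /nA; apply: opnorm_le_bound; [exact: bA | | exact: dd_ge0].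
by move=> x; apply: HG.
Qed.

Lemma thpred N : th ^+ N.-1 <= th ^+ N / th.
Proof.
case: N => [|j] /=.
  by rewrite expr0 mul1r invf_ge1 // ltW.
by rewrite exprS mulrAC divff ?mul1r // gt_eqF.
Qed.

Lemma zm (Z : zmodType) (o x y : Z) : o - x + y - o = y - x.
Proof. by rewrite -addrA addrC -addrA addKr. Qed.

Lemma resid_bound N : qn (Qa S a b * FF U a b N - 1) <= (4 * C + nA b * B / th) * th ^+ N.
Proof.
rewrite (QF a b SU N) zm (le_trans (qnB _ _)) // addrC [X in _ <= X]mulrDl.
apply: lerD.
  rewrite (le_trans (U_pow_bound _ _)) //.
  apply: le_trans (ler_wpM2r _ (eta_bound _)) _.
    by rewrite mulr_ge0 // exprn_ge0 // sig_ge0.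
  have -> : N.+1%:R * tau ^+ N.+1.-1 * (4 * sig ^+ N) = 4 * (N.+1%:R * (tau * sig) ^+ N).
    by rewrite /= exprMn; ring.
  by rewrite -mulrA ler_wpM2l.
rewrite scM -mulrA (le_trans (qnM _ _)) // qn_sc.
rewrite -!mulrA; apply: ler_wpM2l; first exact: nA_ge0.
apply: le_trans (term_bound N) _.
have -> : 4 * (sig * (sig * (C * (th^-1 * th ^+ N)))) = B * (th ^+ N / th).
  by rewrite /B expr2; ring.
by apply: ler_wpM2l; [exact: B_ge0 | exact: thpred].
Qed.

Lemma qn_c0 (p : QK) : nA (q0 p) <= qn p.
Proof. have := nA_ge0 (q1 p); have := nA_ge0 (q2 p); have := nA_ge0 (q3 p); rewrite /qn; lra. Qed.
Lemma qn_c1 (p : QK) : nA (q1 p) <= qn p.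
Proof. have := nA_ge0 (q0 p); have := nA_ge0 (q2 p); have := nA_ge0 (q3 p); rewrite /qn; lra. Qed.
Lemma qn_c2 (p : QK) : nA (q2 p) <= qn p.
Proof. have := nA_ge0 (q1 p); have := nA_ge0 (q0 p); have := nA_ge0 (q3 p); rewrite /qn; lra. Qed.
Lemma qn_c3 (p : QK) : nA (q3 p) <= qn p.
Proof. have := nA_ge0 (q1 p); have := nA_ge0 (q2 p); have := nA_ge0 (q0 p); rewrite /qn; lra. Qed.

Lemma main_geo : exists L : qop V,
    bounded_qop L /\
    (fun N => qopnorm (qsub (series_right T s N) L)) @ \oo --> (0 : R) /\
    (fun N => qopnorm (qsub (series_left T s N) L)) @ \oo --> (0 : R) /\
    (forall x : X V, qop_apply (Qcs T s) (qop_apply L x) = x) /\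
    (forall x : X V, qop_apply L (qop_apply (Qcs T s) x) = x).
Proof.
have [l0 H0] := @comp_lim (fun p => q0 p) (fun p q => erefl) qn_c0.
have [l1 H1] := @comp_lim (fun p => q1 p) (fun p q => erefl) qn_c1.
have [l2 H2] := @comp_lim (fun p => q2 p) (fun p q => erefl) qn_c2.
have [l3 H3] := @comp_lim (fun p => q3 p) (fun p q => erefl) qn_c3.
pose l : QK := Quat l0 l1 l2 l3.
have Hl N : qn (FF U a b N - l) <= 4 * dd N.
  have := H0 N; have := H1 N; have := H2 N; have := H3 N.
  rewrite /qn /=; lra.
have Hl' N : qn (l - FF U a b N) <= 4 * dd N.
  by rewrite -opprB (le_trans (qnN _)).
have c4 : (fun N => 4 * dd N) @ \oo --> (0 : R).
  by rewrite -(mulr0 4); apply: cvgMl_tmp; exact: dd_cvg.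
pose K0 := qn (Qa S a b) * (4 * B / (1 - th)) + (4 * C + nA b * B / th).
have dE N : 4 * dd N = 4 * B / (1 - th) * th ^+ N by rewrite /dd; field; rewrite subr_eq0 gt_eqF.
have Ql : Qa S a b * l = 1.
  apply/eqP; rewrite -subr_eq0; apply/eqP; apply: qn_eq0.
  apply: (@le0_cvg _ _ (fun N => K0 * th ^+ N)); first by apply: cvg_geo; rewrite ltW.
  move=> N; have -> : Qa S a b * l - 1 = Qa S a b * (l - FF U a b N) + (Qa S a b * FF U a b N - 1).
    by rewrite mulrBr addrA subrK.
  rewrite (le_trans (qnD _ _)) // /K0 [X in _ <= X]mulrDl; apply: lerD; last exact: resid_bound.
  by rewrite (le_trans (qnM _ _)) // -mulrA -dE ler_wpM2l ?qn_ge0.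
have lQ : l * Qa S a b = 1.
  apply/eqP; rewrite -subr_eq0; apply/eqP; apply: qn_eq0.
  apply: (@le0_cvg _ _ (fun N => K0 * th ^+ N)); first by apply: cvg_geo; rewrite ltW.
  move=> N; have -> : l * Qa S a b - 1 = (l - FF U a b N) * Qa S a b + (Qa S a b * FF U a b N - 1).
    by rewrite (commQa_FF a b SU US N) mulrBl addrA subrK.
  rewrite (le_trans (qnD _ _)) // /K0 [X in _ <= X]mulrDl; apply: lerD; last exact: resid_bound.
  by rewrite (le_trans (qnM _ _)) // mulrC -mulrA -dE ler_wpM2l ?qn_ge0.
exists (mv l); split.
  by split; apply: blin_bounded_op; apply: bA.
split.
  have -> : (fun N => qopnorm (qsub (series_right T s N) (mv l))) = fun N => qn (FF U a b N - l).
    by apply/funext => N; rewrite series_rightE mv_sub.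
  apply: squeeze0 c4 => N; by rewrite qn_ge0 Hl.
split.
  have -> : (fun N => qopnorm (qsub (series_left T s N) (mv l))) = fun N => qn (FF U a b N - l).
    by apply/funext => N; rewrite series_leftE mv_sub.
  apply: squeeze0 c4 => N; by rewrite qn_ge0 Hl.
split => x; rewrite QcsE apply_mv.
  by rewrite [Qk _ _ * _]Ql apply_mv1.
by rewrite [_ * Qk _ _]lQ apply_mv1.
Qed.
End Geo.
End Main.

Theorem proposition5p3 (R : realType) (V : completeNormedModType R)
  (T : qop V) (s : H R) :
  in_BC T -> qopnorm T < habs s ->
  exists L : qop V,
    bounded_qop L /\
    (fun N => qopnorm (qsub (series_right T s N) L)) @ \oo --> (0 : R) /\
    (fun N => qopnorm (qsub (series_left T s N) L)) @ \oo --> (0 : R) /\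
    (forall x : X V, qop_apply (Qcs T s) (qop_apply L x) = x) /\
    (forall x : X V, qop_apply L (qop_apply (Qcs T s) x) = x).
Proof.
move=> hT hs.
have [th [C [th0 th1 C0 HC]]] := mgeo (rho01 hT hs).
exact: (main_geo hs th0 th1 C0 HC).
Qed.
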